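(* Consider a network $N$ with service-vector set $\mathcal{S}$ and routing matrix $R$. Fix $w\in\mathbb{R}_{++}^n$, an arrival function $A(\cdot)$, and $\lambda\in\mathbb{R}_+^n$. Let $Q(\cdot)$ be a queue length process of $N$ driven by $A(\cdot)$ under a $w$-WMW policy. Let $W=\mathrm{diag}(w)$, $\tilde\lambda=W^{1/2}\lambda$, $\tilde A(t)=W^{1/2}A(t)$ for $t\in\mathbb{Z}_+$, and let $\tilde N$ be the network with service-vector set $\tilde{\mathcal{S}}=W^{1/2}\mathcal{S}$ and routing matrix $\tilde R=W^{1/2}RW^{-1/2}$. Then: (a) $\tilde Q(t)=W^{1/2}Q(t)$ is a queue length process of $\tilde N$ driven by $\tilde A(\cdot)$ under a MW policy; (b) $\tilde q(t)=W^{1/2}q(t)$ is a fluid solution of $\tilde N$ for arrival rate $\tilde\lambda$ and unit weights if and only if $q(\cdot)$ is a fluid solution of $N$ for arrival rate $\lambda$ and weights $w$.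
   Context: A network consists of $n$ queues, a routing matrix $R\in\mathbb{R}^{n\times n}$ with nonnegative entries, and a finite set $\mathcal{S}\subset\mathbb{R}_+^n$ of service vectors. A queue length process driven by $A:\mathbb{Z}_+\to\mathbb{R}_+^n$ evolves by $Q(t+1)=Q(t)+A(t)+(R-I)\min(\mu(t),Q(t))$ (componentwise min), $\mu(t)\in\mathcal{S}$. For weights $w\in\mathbb{R}_{++}^n$, $\mathcal{S}_w(x)=\arg\max_{\mu\in\mathcal{S}}x^T\mathrm{diag}(w)(I-R)\mu$; the $w$-WMW policy chooses $\mu(t)\in\mathcal{S}_w(Q(t))$ arbitrarily; MW is $w=(1,\dots,1)$. A fluid solution for $\lambda\in\mathbb{R}_+^n$ and weights $w$ is an absolutely continuous $q:\mathbb{R}_+\to\mathbb{R}_+^n$ for which there exist $s_\mu:\mathbb{R}_+\to[0,1]$ ($\mu\in\mathcal{S}$) and $y:\mathbb{R}_+\to\mathbb{R}_+^n$ with, for a.e. $t$: $\dot q(t)=\lambda+(R-I)(\sum_\mu s_\mu(t)\mu-y(t))$, $\sum_\mu s_\mu(t)=1$, $y_i(t)\le\sum_\mu s_\mu(t)\mu_i$, $q_i(t)>0\Rightarrow y_i(t)=0$, $\mu\notin\mathcal{S}_w(q(t))\Rightarrow s_\mu(t)=0$. $W^{1/2}\mathcal{S}=\{W^{1/2}\mu:\mu\in\mathcal{S}\}$. *)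

(* Defs.v *)
From HB Require Import structures.
From mathcomp Require Import all_boot all_order all_algebra finmap.
From mathcomp Require Import all_classical all_reals all_analysis.
Set Implicit Arguments. Unset Strict Implicit. Unset Printing Implicit Defensive.
Import Order.TTheory GRing.Theory Num.Theory.
Import numFieldNormedType.Exports.
Local Open Scope ring_scope.

Section Defs.
Variables (K : realType) (n : nat).

Definition nonneg_vec (x : 'cV[K]_n) : Prop := forall i, 0 <= x i 0.
Definition pos_vec (x : 'cV[K]_n) : Prop := forall i, 0 < x i 0.

Definition Wmx (w : 'cV[K]_n) : 'M[K]_n := diag_mx (w^T).
Definition Whalf (w : 'cV[K]_n) : 'M[K]_n := diag_mx (\row_i Num.sqrt (w i 0)).
Definition Wmhalf (w : 'cV[K]_n) : 'M[K]_n := diag_mx (\row_i (Num.sqrt (w i 0))^-1).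

(* unit weights (MW policy) *)
Definition unit_w : 'cV[K]_n := const_mx 1.

Definition wobj (R : 'M[K]_n) (w x mu : 'cV[K]_n) : K :=
  (x^T *m Wmx w *m (1%:M - R) *m mu) 0 0.

Definition in_Sw (S : {fset 'cV[K]_n}) (R : 'M[K]_n) (w x mu : 'cV[K]_n) : Prop :=
  mu \in S /\ forall nu, nu \in S -> wobj R w x nu <= wobj R w x mu.

Definition minv (x y : 'cV[K]_n) : 'cV[K]_n := \col_i Num.min (x i 0) (y i 0).

Definition wmw_process (S : {fset 'cV[K]_n}) (R : 'M[K]_n) (w : 'cV[K]_n)
  (A Q : nat -> 'cV[K]_n) : Prop :=
  nonneg_vec (Q 0%N) /\
  exists mu : nat -> 'cV[K]_n,
    forall t : nat, in_Sw S R w (Q t) (mu t) /\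
      Q (t.+1) = Q t + A t + (R - 1%:M) *m minv (mu t) (Q t).

Definition abs_cont_on (a b : K) (f : K -> K) : Prop :=
  forall e : K, 0 < e -> exists2 d : K, 0 < d &
    forall (m : nat) (x y : 'I_m -> K),
      (forall k, a <= x k /\ x k <= y k /\ y k <= b) ->
      (forall k l : 'I_m, (k < l)%N -> y k <= x l) ->
      \sum_k (y k - x k) < d ->
      \sum_k `|f (y k) - f (x k)| < e.

Definition abs_cont_Rplus (f : K -> K) : Prop :=
  forall T : K, 0 <= T -> abs_cont_on 0 T f.

Definition fluid_solution (S : {fset 'cV[K]_n}) (R : 'M[K]_n) (lam w : 'cV[K]_n)
  (q : K -> 'cV[K]_n) : Prop :=
  (forall t, 0 <= t -> nonneg_vec (q t)) /\
  (forall i, abs_cont_Rplus (fun t => q t i 0)) /\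
  exists (s : 'cV[K]_n -> K -> K) (y : K -> 'cV[K]_n),
    (forall mu t, mu \in S -> 0 <= t -> 0 <= s mu t <= 1) /\
    (forall t, 0 <= t -> nonneg_vec (y t)) /\
    {ae (@lebesgue_measure K), forall t : K, 0 <= t ->
      (forall i, is_derive t 1 (fun u => q u i 0)
         ((lam + (R - 1%:M) *m (\sum_(mu <- S) s mu t *: mu - y t)) i 0)) /\
      \sum_(mu <- S) s mu t = 1 /\
      (forall i, y t i 0 <= (\sum_(mu <- S) s mu t *: mu) i 0) /\
      (forall i, 0 < q t i 0 -> y t i 0 = 0) /\
      (forall mu, mu \in S -> ~ in_Sw S R w (q t) mu -> s mu t = 0)}.

End Defs.

(* Main.v *)
Require Import Defs.
From HB Require Import structures.
From mathcomp Require Import all_boot all_order all_algebra finmap.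
From mathcomp Require Import all_classical all_reals all_analysis.
Import Order.TTheory GRing.Theory Num.Theory.
Import numFieldNormedType.Exports.
Local Open Scope ring_scope.

Section Aux.
Variables (K : realType) (n : nat) (w : 'cV[K]_n).
Hypothesis hw : pos_vec w.

Let d i := Num.sqrt (w i 0).

Lemma dpos i : 0 < d i.
Proof. by rewrite /d sqrtr_gt0 hw. Qed.

Lemma dneq0 i : d i != 0.
Proof. by rewrite gt_eqF ?dpos. Qed.

Lemma DME {m} (M : 'M[K]_(n, m)) i j : (Whalf w *m M) i j = d i * M i j.
Proof. by rewrite /Whalf mul_diag_mx !mxE. Qed.

Lemma DmME {m} (M : 'M[K]_(n, m)) i j : (Wmhalf w *m M) i j = (d i)^-1 * M i j.
Proof. by rewrite /Wmhalf mul_diag_mx !mxE. Qed.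

Lemma DDm : Whalf w *m Wmhalf w = 1%:M.
Proof.
apply/matrixP => i j; rewrite DME /Wmhalf !mxE /d.
have [e|ne] := eqVneq i j; last by rewrite ?(negPf ne) !mulr0n mulr0.
subst j.
by rewrite !mulr1n divff // (dneq0 i).
Qed.

Lemma DmD : Wmhalf w *m Whalf w = 1%:M.
Proof.
apply/matrixP => i j; rewrite DmME /Whalf !mxE /d.
have [e|ne] := eqVneq i j; last by rewrite ?(negPf ne) !mulr0n mulr0.
subst j.
by rewrite !mulr1n mulVf // (dneq0 i).
Qed.

Lemma DD : Whalf w *m Whalf w = Wmx w.
Proof.
apply/matrixP => i j; rewrite DME /Whalf /Wmx !mxE /d.
have [e|ne] := eqVneq i j; last by rewrite ?(negPf ne) !mulr0n mulr0.
subst j.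
by rewrite !mulr1n -expr2 sqr_sqrtr // ltW ?hw.
Qed.

Lemma DmDv {m} (v : 'M[K]_(n, m)) : Wmhalf w *m (Whalf w *m v) = v.
Proof. by rewrite mulmxA DmD mul1mx. Qed.

Lemma DDmv {m} (v : 'M[K]_(n, m)) : Whalf w *m (Wmhalf w *m v) = v.
Proof. by rewrite mulmxA DDm mul1mx. Qed.

Lemma D_inj : injective (fun v : 'cV[K]_n => Whalf w *m v).
Proof. by move=> u v /= /(congr1 (mulmx (Wmhalf w))); rewrite !DmDv. Qed.

Lemma wobjD (R : 'M[K]_n) (x nu : 'cV[K]_n) :
  wobj (Whalf w *m R *m Wmhalf w) (unit_w K n) (Whalf w *m x) (Whalf w *m nu)
  = wobj R w x nu.
Proof.
have trD : (Whalf w)^T = Whalf w by rewrite /Whalf tr_diag_mx.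
rewrite /wobj /Wmx /unit_w trmx_const diag_const_mx mulmx1 trmx_mul trD.
congr (_ 0 0).
rewrite -!mulmxA; congr (_ *m _).
rewrite mulmxBl mul1mx mulmxBl mul1mx mulmxBr mulmxBr.
rewrite -!mulmxA DmDv !mulmxA DD //.
Qed.

Lemma RtD (R : 'M[K]_n) (v : 'cV[K]_n) : (Whalf w *m R *m Wmhalf w - 1%:M) *m (Whalf w *m v)
  = Whalf w *m ((R - 1%:M) *m v).
Proof.
by rewrite !mulmxBl !mul1mx mulmxBr -!mulmxA DmDv.
Qed.

Lemma minvD (a b : 'cV[K]_n) : minv (Whalf w *m a) (Whalf w *m b) = Whalf w *m minv a b.
Proof.
apply/matrixP => i j; rewrite (ord1 j) DME; move: (DME a i 0) (DME b i 0); rewrite !mxE => -> ->.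
by rewrite minr_pMr // ltW ?dpos.
Qed.

Lemma nonnegD (x : 'cV[K]_n) : nonneg_vec (Whalf w *m x) <-> nonneg_vec x.
Proof.
split=> H i; have := H i; rewrite ?DME.
  by rewrite pmulr_rge0 ?dpos.
by move=> h; rewrite mulr_ge0 // ltW ?dpos.
Qed.

Lemma memD (S : {fset 'cV[K]_n}) mu :
  (Whalf w *m mu \in [fset Whalf w *m mu | mu in S]%fset) = (mu \in S).
Proof. by rewrite mem_imfset //; exact: D_inj. Qed.

Lemma bigD (S : {fset 'cV[K]_n}) (F : 'cV[K]_n -> 'cV[K]_n) :
  \sum_(mu <- [fset Whalf w *m mu | mu in S]%fset) F mu =
  \sum_(mu <- S) F (Whalf w *m mu).
Proof. rewrite big_imfset //=; move=> x y _ _; exact: D_inj. Qed.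

Lemma bigDK (S : {fset 'cV[K]_n}) (F : 'cV[K]_n -> K) :
  \sum_(mu <- [fset Whalf w *m mu | mu in S]%fset) F mu =
  \sum_(mu <- S) F (Whalf w *m mu).
Proof. rewrite big_imfset //=; move=> x y _ _; exact: D_inj. Qed.

Lemma in_SwD (S : {fset 'cV[K]_n}) R x mu :
  in_Sw [fset Whalf w *m mu | mu in S]%fset (Whalf w *m R *m Wmhalf w)
    (unit_w K n) (Whalf w *m x) (Whalf w *m mu) <-> in_Sw S R w x mu.
Proof.
rewrite /in_Sw memD; split=> -[Hm H]; split=> // nu.
  move=> Hnu; have := H (Whalf w *m nu); rewrite memD => /(_ Hnu).
  by rewrite wobjD wobjD.
move=> /imfsetP [nu' /= Hnu' ->]. rewrite wobjD wobjD. exact: H.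
Qed.
Lemma abs_cont_scale (c : K) (f : K -> K) : 0 < c ->
  abs_cont_Rplus f -> abs_cont_Rplus (fun t => c * f t).
Proof.
move=> c0 H T T0 e e0.
have [dd d0 Hd] := H T T0 (e / c) (divr_gt0 e0 c0).
exists dd => // m x y H1 H2 H3.
have := Hd m x y H1 H2 H3.
rewrite ltr_pdivlMr // => h.
suff -> : \sum_k `|c * f (y k) - c * f (x k)| = (\sum_k `|f (y k) - f (x k)|) * c by [].
rewrite mulr_suml; apply: eq_bigr => k _.
by rewrite -mulrBr normrM (gtr0_norm c0) mulrC.
Qed.

Lemma abs_cont_scaleE (c : K) (f : K -> K) : 0 < c ->
  abs_cont_Rplus (fun t => c * f t) <-> abs_cont_Rplus f.
Proof.
move=> c0; split; last exact: abs_cont_scale.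
have ci : 0 < c^-1 by rewrite invr_gt0.
move=> /(abs_cont_scale _ _ ci).
have -> // : (fun t => c^-1 * (c * f t)) = f.
by apply: funext => t; rewrite mulrA mulVf ?mul1r // gt_eqF.
Qed.

Lemma derive_scale (c : K) (f : K -> K) (x df : K) :
  is_derive x 1 f df -> is_derive x 1 (fun u => c * f u) (c * df).
Proof. move=> H; exact: (is_deriveZ c H). Qed.

Lemma derive_scaleE (c : K) (f : K -> K) (x df : K) : c != 0 ->
  is_derive x 1 (fun u => c * f u) (c * df) <-> is_derive x 1 f df.
Proof.
move=> c0; split; last exact: derive_scale.
move=> /(derive_scale c^-1).
have -> : (fun u => c^-1 * (c * f u)) = f.
  by apply: funext => t; rewrite mulrA mulVf ?mul1r.
by rewrite mulrA mulVf ?mul1r.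
Qed.


Variables (S : {fset 'cV[K]_n}) (R : 'M[K]_n) (lam : 'cV[K]_n).

Local Notation D := (Whalf w).
Local Notation St := [fset Whalf w *m mu | mu in S]%fset.
Local Notation Rt := (Whalf w *m R *m Wmhalf w).

Lemma funDE (f : K -> 'cV[K]_n) i :
  (fun u => (D *m f u) i 0) = (fun u => d i * f u i 0).
Proof. by apply: funext => u; rewrite DME. Qed.

Lemma point (q : K -> 'cV[K]_n) (s s' : 'cV[K]_n -> K -> K)
  (y y' : K -> 'cV[K]_n) (t : K) :
  (forall mu, mu \in S -> s' (D *m mu) t = s mu t) ->
  y' t = D *m y t ->
  ((forall i, is_derive t 1 (fun u => (D *m q u) i 0)
         ((D *m lam + (Rt - 1%:M) *m (\sum_(mu <- St) s' mu t *: mu - y' t)) i 0)) /\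
      \sum_(mu <- St) s' mu t = 1 /\
      (forall i, y' t i 0 <= (\sum_(mu <- St) s' mu t *: mu) i 0) /\
      (forall i, 0 < (D *m q t) i 0 -> y' t i 0 = 0) /\
      (forall mu, mu \in St -> ~ in_Sw St Rt (unit_w K n) (D *m q t) mu -> s' mu t = 0))
  <->
  ((forall i, is_derive t 1 (fun u => q u i 0)
         ((lam + (R - 1%:M) *m (\sum_(mu <- S) s mu t *: mu - y t)) i 0)) /\
      \sum_(mu <- S) s mu t = 1 /\
      (forall i, y t i 0 <= (\sum_(mu <- S) s mu t *: mu) i 0) /\
      (forall i, 0 < q t i 0 -> y t i 0 = 0) /\
      (forall mu, mu \in S -> ~ in_Sw S R w (q t) mu -> s mu t = 0)).
Proof.
move=> Hs Hy.
set Sg := \sum_(mu <- S) s mu t *: mu.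
have HS : \sum_(mu <- St) s' mu t *: mu = D *m Sg.
  rewrite bigD mulmx_sumr /Sg !big_seq; apply: eq_bigr => mu Hmu.
  by rewrite Hs // scalemxAr.
have H1 : \sum_(mu <- St) s' mu t = \sum_(mu <- S) s mu t.
  rewrite bigDK !big_seq; apply: eq_bigr => mu Hmu; by rewrite Hs.
have Hv : D *m lam + (Rt - 1%:M) *m (D *m Sg - y' t)
    = D *m (lam + (R - 1%:M) *m (Sg - y t)).
  by rewrite Hy -mulmxBr RtD -mulmxDr.
rewrite HS H1 Hv Hy.
have Ed i : d i != 0 by exact: dneq0.
have Ep i : 0 < d i by exact: dpos.
split=> -[Hd [H1' [H2 [H3 H4]]]]; (split; [|split; [|split; [|split]]]) => //.
- by move=> i; have := Hd i; rewrite funDE DME derive_scaleE.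
- by move=> i; have := H2 i; rewrite !DME ler_pM2l.
- move=> i qi; have := H3 i; rewrite !DME pmulr_rgt0 // => /(_ qi) /eqP.
  by rewrite mulf_eq0 (negPf (Ed i)) => /eqP.
- move=> mu Hmu Hn; rewrite -Hs //; apply: H4; first by rewrite memD.
  by rewrite in_SwD.
- by move=> i; rewrite funDE DME derive_scaleE.
- by move=> i; rewrite !DME ler_pM2l.
- move=> i; rewrite !DME pmulr_rgt0 // => /H3 ->; by rewrite mulr0.
- move=> mu' /imfsetP [mu /= Hmu ->] Hn; rewrite Hs //; apply: H4 => //.
  by rewrite -in_SwD.
Qed.

Lemma partA (A Q : nat -> 'cV[K]_n) : wmw_process S R w A Q ->
  wmw_process St Rt (unit_w K n) (fun t => D *m A t) (fun t => D *m Q t).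
Proof.
move=> [H0 [mu Hmu]]; split; first by rewrite /= nonnegD.
exists (fun t => D *m mu t) => t; have [Hin Heq] := Hmu t; split.
  by rewrite in_SwD.
by rewrite Heq minvD RtD !mulmxDr.
Qed.

Lemma partB (q : K -> 'cV[K]_n) :
  fluid_solution St Rt (D *m lam) (unit_w K n) (fun t => D *m q t) <->
  fluid_solution S R lam w q.
Proof.
split.
- move=> [Hnn [Hac [s' [y' [Hs [Hy Hae]]]]]]; split.
    by move=> t t0; have := Hnn t t0; rewrite /= nonnegD.
  split.
    by move=> i; have := Hac i => /=; rewrite funDE (abs_cont_scaleE _ _ (dpos i)).
  exists (fun mu t => s' (D *m mu) t), (fun t => Wmhalf w *m y' t).
  split; [|split].
  + by move=> mu t Hmu t0; apply: Hs => //; rewrite memD.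
  + by move=> t t0; rewrite -nonnegD DDmv; exact: Hy.
  + have FF := ae_filter_ringOfSetsType (@lebesgue_measure K).
    apply: filterS Hae => t Ht t0; have := Ht t0.
    have [h _] := point q (fun mu t => s' (D *m mu) t) s'
       (fun t => Wmhalf w *m y' t) y' t (fun _ _ => erefl) (esym (DDmv _)).
    exact: h.
- move=> [Hnn [Hac [s [y [Hs [Hy Hae]]]]]]; split.
    by move=> t t0; have := Hnn t t0; rewrite /= nonnegD.
  split.
    by move=> i /=; rewrite funDE (abs_cont_scaleE _ _ (dpos i)).
  exists (fun mu t => s (Wmhalf w *m mu) t), (fun t => D *m y t).
  split; [|split].
  + by move=> mu' t /imfsetP [mu /= Hmu ->] t0; rewrite DmDv; apply: Hs.
  + by move=> t t0; rewrite nonnegD; exact: Hy.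
  + have FF := ae_filter_ringOfSetsType (@lebesgue_measure K).
    apply: filterS Hae => t Ht t0; have := Ht t0.
    have [_ h] := point q s (fun mu t => s (Wmhalf w *m mu) t)
       y (fun t => D *m y t) t (fun mu _ => congr1 (s^~ t) (DmDv mu)) erefl.
    exact: h.
Qed.

End Aux.


Theorem lemma4 (K : realType) (n : nat) (S : {fset 'cV[K]_n}) (R : 'M[K]_n)
  (w : 'cV[K]_n) (A : nat -> 'cV[K]_n) (lam : 'cV[K]_n) :
  (forall i j, 0 <= R i j) ->
  (forall mu, mu \in S -> nonneg_vec mu) ->
  pos_vec w ->
  (forall t, nonneg_vec (A t)) ->
  nonneg_vec lam ->
  let St := [fset Whalf w *m mu | mu in S]%fset in
  let Rt := Whalf w *m R *m Wmhalf w in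
  let At := fun t => Whalf w *m A t in
  let lamt := Whalf w *m lam in
  (forall Q : nat -> 'cV[K]_n, wmw_process S R w A Q ->
     wmw_process St Rt (unit_w K n) At (fun t => Whalf w *m Q t)) /\
  (forall q : K -> 'cV[K]_n,
     fluid_solution St Rt lamt (unit_w K n) (fun t => Whalf w *m q t) <->
     fluid_solution S R lam w q).
Proof.
move=> _ _ hw _ _ St Rt At lamt; rewrite /St /Rt /At /lamt; split.
  by move=> Q; exact: (partA _ _ _ hw).
by move=> q; exact: (partB _ _ _ hw).
Qed.
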